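(* Let $Q$ be a complete quiver and $j$ a mutable vertex which is cycle-preserving for $Q$ and is not the apex of a vortex subquiver of $Q$. Then every oriented 3-cycle in $\mu_j(Q)$ contains $j$, and $\mu_j(Q)$ is vortex-free.
   Context: A quiver is a finite directed multigraph with no loops and no oriented 2-cycles, whose vertex set is partitioned into mutable and frozen vertices; arrows between two frozen vertices are ignored. $b_{ik}$ = number of arrows $i\to k$ minus number of arrows $k\to i$; $Q|_S$ is the induced subquiver on $S$. Mutation $\mu_j$ at mutable $j$: for each path $i\to j\to k$ add $b_{ij}b_{jk}$ arrows $i\to k$, reverse all arrows at $j$, cancel 2-cycles. A quiver is complete if there is at least one arrow between every pair of vertices at least one of which is mutable. A 3-vertex (sub)quiver is an oriented 3-cycle if it has at most one frozen vertex and its underlying directed graph is not acyclic. A mutable vertex $j$ is cycle-preserving for $Q$ if whenever $Q|_{\{i,j,k\}}$ is an oriented 3-cycle containing $j$, so is $\mu_j(Q)|_{\{i,j,k\}}$. A vortex is a quiver on four vertices, at least three of them mutable, in which one vertex (the apex) is a source or a sink and the other three vertices support an oriented cycle. A vertex is the apex of a vortex in $Q$ if it is the apex of some 4-vertex induced subquiver which is a vortex; $Q$ is vortex-free if no 4-vertex induced subquiver is a vortex. *)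

(* Defs.v *)
From mathcomp Require Import all_boot all_order all_algebra.
Set Implicit Arguments. Unset Strict Implicit. Unset Printing Implicit Defensive.
Import Order.TTheory GRing.Theory Num.Theory.
Local Open Scope ring_scope.

(* A quiver on the finite vertex type T is given by a set [mut] of mutable
   vertices (the others are frozen) and its exchange matrix
   b i k = #(arrows i -> k) - #(arrows k -> i).  Since there are no loops and
   no oriented 2-cycles, the quiver is determined by b, which must be
   skew-symmetric.  Entries between two frozen vertices are ignored. *)
Definition skew_sym (T : finType) (b : T -> T -> int) : Prop :=
  forall i k, b k i = - b i k.

Definition arr (T : finType) (mut : {set T}) (b : T -> T -> int) (i k : T) : bool :=
  ((i \in mut) || (k \in mut)) && (0 < b i k).

Definition posp (x : int) : int := if 0 < x then x else 0.

Definition mutate (T : finType) (j : T) (b : T -> T -> int) : T -> T -> int :=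
  fun i k =>
    if (i == j) || (k == j) then - b i k
    else b i k + posp (b i j) * posp (b j k) - posp (- b i j) * posp (- b j k).

Definition complete (T : finType) (mut : {set T}) (b : T -> T -> int) : Prop :=
  forall i k, i != k -> (i \in mut) || (k \in mut) -> b i k != 0.

(* the underlying directed graph on three distinct vertices (no loops, no
   2-cycles) is not acyclic iff it contains a directed 3-cycle *)
Definition dcycle3 (T : finType) (mut : {set T}) (b : T -> T -> int) (i j k : T) : bool :=
  [&& arr mut b i j, arr mut b j k & arr mut b k i] ||
  [&& arr mut b j i, arr mut b k j & arr mut b i k].

Definition ocycle3 (T : finType) (mut : {set T}) (b : T -> T -> int) (i j k : T) : bool :=
  [&& i != j, j != k, i != k,
      (1 < (i \in mut) + (j \in mut) + (k \in mut))%N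
    & dcycle3 mut b i j k].

Definition cycle_preserving (T : finType) (mut : {set T}) (b : T -> T -> int) (j : T) : Prop :=
  forall i k, ocycle3 mut b i j k -> ocycle3 mut (mutate j b) i j k.

Definition vortex (T : finType) (mut : {set T}) (b : T -> T -> int) (a x y z : T) : bool :=
  [&& uniq [:: a; x; y; z],
      (2 < (a \in mut) + (x \in mut) + (y \in mut) + (z \in mut))%N,
      (* a is a source or a sink of the induced subquiver *)
      ~~ [|| arr mut b x a, arr mut b y a | arr mut b z a] ||
      ~~ [|| arr mut b a x, arr mut b a y | arr mut b a z]
    & dcycle3 mut b x y z].

Definition apex_of_vortex (T : finType) (mut : {set T}) (b : T -> T -> int) (a : T) : Prop :=
  exists x y z, vortex mut b a x y z.

Definition vortex_free (T : finType) (mut : {set T}) (b : T -> T -> int) : Prop :=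
  forall a x y z, ~~ vortex mut b a x y z.

(* Main.v *)
Require Import Defs.
From mathcomp Require Import all_boot all_order all_algebra ring lra.
Import Order.TTheory GRing.Theory Num.Theory.
Local Open Scope ring_scope.
Set Implicit Arguments. Unset Strict Implicit.

Lemma pospE (x : int) : 0 < x -> posp x = x.
Proof. by rewrite /posp => ->. Qed.
Lemma posp0 (x : int) : x <= 0 -> posp x = 0.
Proof. by rewrite /posp; case: ltrP => // h h'; have := lt_le_trans h h'; rewrite ltxx. Qed.

Lemma mutate_skew (T : finType) (j : T) b : skew_sym b -> skew_sym (mutate j b).
Proof.
move=> sk i k; rewrite /mutate orbC; case: ifP => _; first by rewrite sk.
rewrite (sk i k) (sk i j) (sk j k) !opprK; ring.
Qed.

Lemma mutate_jl (T : finType) (j : T) b k : mutate j b j k = - b j k.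
Proof. by rewrite /mutate eqxx. Qed.
Lemma mutate_jr (T : finType) (j : T) b k : mutate j b k j = - b k j.
Proof. by rewrite /mutate eqxx orbT. Qed.

Lemma mutate_same (T : finType) (j : T) b i k : i != j -> k != j ->
  (0 < b i j) = (0 < b k j) -> skew_sym b -> b i j != 0 -> b k j != 0 ->
  mutate j b i k = b i k.
Proof.
move=> ij kj e sk n1 n2; rewrite /mutate (negbTE ij) (negbTE kj) /= (sk k j).
have [h1|h1|h1] := ltrgtP 0 (b i j); last by rewrite -h1 eqxx in n1.
  have h2 : 0 < b k j by rewrite -e.
  rewrite (@posp0 (- b k j)) ?oppr_le0 ?ltW // (@posp0 (- b i j)) ?oppr_le0 ?ltW //.
  by rewrite !mulr0 subr0 addr0 || (rewrite !mulr0; ring). 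
have [h2|h2|h2] := ltrgtP 0 (b k j); last by rewrite -h2 eqxx in n2.
  by rewrite -e ltNge ltW in h2.
rewrite (@posp0 (b i j)) ?ltW // (@posp0 (- - b k j)) ?opprK ?ltW //.
by rewrite !mul0r !mulr0 subr0 addr0 || (rewrite !mul0r !mulr0; ring).
Qed.

Lemma mutate_IO (T : finType) (mut : {set T}) b (j i k : T) :
  skew_sym b -> complete mut b -> j \in mut -> cycle_preserving mut b j ->
  i != j -> k != j -> 0 < b i j -> 0 < b j k -> (i \in mut) || (k \in mut) ->
  0 < mutate j b i k.
Proof.
move=> sk cp jm cpr ij kj h1 h2 m.
have ik : i != k.
  apply/eqP => e; subst k; move: h2; rewrite sk oppr_gt0 => h2.
  by have := lt_trans h1 h2; rewrite ltxx.
have nz := cp _ _ ik m.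
case: (ltrgtP 0 (b i k)) nz => h3 _ //.
  rewrite /mutate (negbTE ij) (negbTE kj) /= (pospE h1) (pospE h2) (@posp0 (- b i j)) ?oppr_le0 ?ltW //.
  rewrite mul0r subr0; apply: addr_gt0 => //; exact: mulr_gt0.
have oc : ocycle3 mut b i j k.
  rewrite /ocycle3 ij ik eq_sym kj /= jm.
  apply/andP; split; first by case/orP: m => ->; case: (_ \in _).
  rewrite /dcycle3 /arr jm !orbT h1 h2 /= (sk i k) oppr_gt0 h3 /=.
  by rewrite (orbC (k \in mut)) m.
have := cpr _ _ oc; case/and5P => _ _ _ _; rewrite /dcycle3 /arr mutate_jr mutate_jl.
rewrite oppr_gt0 ltNge (ltW h1) /= andbF /=.
by case/and3P => _ _ /andP[].
Qed.

Lemma nzj (T : finType) (mut : {set T}) b (j v : T) :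
  complete mut b -> j \in mut -> v != j -> b v j != 0.
Proof. by move=> cp jm vj; apply: cp => //; rewrite jm orbT. Qed.

Lemma sgcase (x : int) : x != 0 -> (0 < x) \/ (x < 0).
Proof. by move=> nz; have [h|h|h] := ltrgtP 0 x; [left|right|rewrite -h eqxx in nz]. Qed.

Lemma arr_imp (T : finType) (mut : {set T}) b (j u v : T) :
  skew_sym b -> complete mut b -> j \in mut -> cycle_preserving mut b j ->
  u != j -> v != j -> arr mut (mutate j b) u v -> (0 < b v j) ==> (0 < b u j).
Proof.
move=> sk cp jm cpr uj vj /andP[m h].
apply/implyP => hv; case: (sgcase (nzj cp jm uj)) => // hu.
have := mutate_IO sk cp jm cpr vj uj hv _ _.
rewrite (sk u j) oppr_gt0 => /(_ hu); rewrite orbC => /(_ m).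
by rewrite (mutate_skew j sk u v) oppr_gt0 ltNge (ltW h).
Qed.

Lemma arr_same (T : finType) (mut : {set T}) b (j u v : T) :
  skew_sym b -> complete mut b -> j \in mut ->
  u != j -> v != j -> (0 < b u j) = (0 < b v j) ->
  arr mut (mutate j b) u v = arr mut b u v.
Proof.
move=> sk cp jm uj vj e.
by rewrite /arr (mutate_same uj vj e sk (nzj cp jm uj) (nzj cp jm vj)).
Qed.

Lemma cnt3 (a x y z : bool) : (2 < a + x + y + z)%N -> [&& a || x, a || y & a || z].
Proof. by case: a; case: x; case: y; case: z. Qed.

Lemma key (T : finType) (mut : {set T}) b (j a p q : T) :
  skew_sym b -> complete mut b -> j \in mut -> cycle_preserving mut b j ->
  a != j -> p != j -> q != j -> (a \in mut) || (p \in mut) -> (a \in mut) || (q \in mut) ->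
  arr mut (mutate j b) j p -> arr mut (mutate j b) q j ->
  (arr mut (mutate j b) j a && arr mut (mutate j b) a q) ||
  (arr mut (mutate j b) a j && arr mut (mutate j b) p a).
Proof.
move=> sk cp jm cpr aj pj qj ap aq /andP[_ hp] /andP[_ hq].
rewrite mutate_jl (sk p j) opprK in hp; rewrite mutate_jr in hq.
case: (sgcase (nzj cp jm aj)) => ha.
- apply/orP; left; rewrite /arr jm /= mutate_jl (sk a j) opprK ha /=.
  rewrite aq /=; apply: (mutate_IO (mut:=mut)) => //; by rewrite (sk q j).
- apply/orP; right; rewrite /arr jm orbT /= mutate_jr oppr_gt0 ha /=.
  apply/andP; split; first by rewrite orbC.
  have hja : 0 < b j a by rewrite (sk a j) oppr_gt0.
  apply: (mutate_IO sk cp jm cpr pj aj hp hja); by rewrite orbC.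
Qed.

Lemma claim1 (T : finType) (mut : {set T}) (b : T -> T -> int) (j : T) :
  skew_sym b -> complete mut b -> j \in mut ->
  cycle_preserving mut b j -> ~ apex_of_vortex mut b j ->
  (forall i k l, ocycle3 mut (mutate j b) i k l -> j \in [:: i; k; l]).
Proof.
move=> sk cp jm cpr nv i k l oc; apply/negPn/negP; rewrite !inE !negb_or.
case/and3P => /[dup] ji; rewrite eq_sym => ij /[dup] jk; rewrite eq_sym => kj /[dup] jl; rewrite eq_sym => lj.
move: oc => /and5P[ik kl il cnt dc].
have im := arr_imp sk cp jm cpr.
have E : ((0 < b i j) = (0 < b k j)) /\ ((0 < b k j) = (0 < b l j)).
  case/orP: dc => /and3P[h1 h2 h3].
    move: (im _ _ ij kj h1) (im _ _ kj lj h2) (im _ _ lj ij h3).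
    by case: (0 < b i j); case: (0 < b k j); case: (0 < b l j).
  move: (im _ _ kj ij h1) (im _ _ lj kj h2) (im _ _ ij lj h3).
  by case: (0 < b i j); case: (0 < b k j); case: (0 < b l j).
case: E => e1 e2.
have as1 := arr_same sk cp jm.
have db : dcycle3 mut b i k l.
  move: dc; rewrite /dcycle3 (as1 _ _ ij kj e1) (as1 _ _ kj lj e2) (as1 _ _ lj ij _);
    last by rewrite e1 e2.
  rewrite (as1 _ _ kj ij _) ?e1 // (as1 _ _ lj kj _) ?e2 // (as1 _ _ ij lj _) ?e1 ?e2 //.
apply: nv; exists i, k, l; rewrite /vortex /= !inE !negb_or ji jk jl ik il kl /= db andbT.
apply/andP; split; first by rewrite jm; move: cnt; case: (i \in mut); case: (k \in mut); case: (l \in mut).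
have n v : 0 < b v j -> (0 < - b v j) = false by move=> hv; rewrite oppr_gt0 ltNge ltW.
case: (sgcase (nzj cp jm ij)) => h.
- apply/orP; right.
  have hk : 0 < b k j by rewrite -e1.
  have hl : 0 < b l j by rewrite -e2.
  by rewrite /arr (sk i j) (sk k j) (sk l j) (n _ h) (n _ hk) (n _ hl) !andbF.
- apply/orP; left; rewrite /arr.
  have hk : (0 < b k j) = false by rewrite -e1 ltNge ltW.
  have hl : (0 < b l j) = false by rewrite -e2 hk.
  by rewrite ltNge ltW //= hk hl !andbF.
Qed.

Lemma neqs (T : eqType) (x y : T) : x != y -> y != x.
Proof. by rewrite eq_sym. Qed.

Ltac fin sk cp jm cpr src a p q h1 h3 :=
  let K := fresh "K" in
  have K := key sk cp jm cpr (a:=a) (p:=p) (q:=q) ltac:(done) ltac:(done) ltac:(done) ltac:(done) ltac:(done) h1 h3;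
  move: src; case/orP: K => /andP[-> ->]; by rewrite !orbT.

Theorem mainTheorem4 (T : finType) (mut : {set T}) (b : T -> T -> int)
  (j : T) :
  skew_sym b -> complete mut b -> j \in mut ->
  cycle_preserving mut b j -> ~ apex_of_vortex mut b j ->
  (forall i k l, ocycle3 mut (mutate j b) i k l -> j \in [:: i; k; l]) /\
  vortex_free mut (mutate j b).
Proof.
move=> sk cp jm cpr nv; have c1 := claim1 sk cp jm cpr nv; split => //.
move=> a x y z; apply/negP => /and4P[u cnt src dc].
move: u; rewrite /= !inE !negb_or andbT => /and3P[/and3P[ax ay az] /andP[xy xz] yz].
have xa := neqs ax; have ya := neqs ay; have za := neqs az.
have yx := neqs xy; have zx := neqs xz; have zy := neqs yz.
have /and3P[max may maz] := cnt3 cnt.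
have oc : ocycle3 mut (mutate j b) x y z.
  rewrite /ocycle3 xy yz xz dc andbT /=.
  by move: cnt; case: (a \in mut); case: (x \in mut); case: (y \in mut); case: (z \in mut).
move: (c1 _ _ _ oc); rewrite !inE => /or3P[]/eqP E.
- subst x; case/orP: (dc) => /and3P[h1 h2 h3].
  + fin sk cp jm cpr src a y z h1 h3.
  + fin sk cp jm cpr src a z y h3 h1.
- subst y; case/orP: (dc) => /and3P[h1 h2 h3].
  + fin sk cp jm cpr src a z x h2 h1.
  + fin sk cp jm cpr src a x z h1 h2.
- subst z; case/orP: (dc) => /and3P[h1 h2 h3].
  + fin sk cp jm cpr src a x y h3 h2.
  + fin sk cp jm cpr src a y x h2 h3.
Qed.
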